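(* Let $(G,\precsim)$ be a compatible quasi-ordered abelian group and let $G^o$ be its set of o-type elements. Then $G^o$ is an initial segment of $G$ and a subgroup of $G$; in particular $(G^o,\precsim)$ is an ordered abelian group.
   Context: A compatible quasi-ordered abelian group is an abelian group $G$ with a total quasi-order $\precsim$ (reflexive, transitive, any two elements comparable) such that, writing $a\sim b$ for $a\precsim b\wedge b\precsim a$: $(Q_1)$ $x\sim0\Rightarrow x=0$; $(Q_2)$ $x\precsim y\wedge y\not\sim z\Rightarrow x+z\precsim y+z$, for all $x,y,z$. With $cl(g)$ the $\sim$-class of $g$, an element $g$ is o-type if $cl(g)=\{g\}$ and $g$ is not of order $2$. A set $S$ is an initial segment if $s\in S$, $a\precsim s$ imply $a\in S$. An ordered abelian group is a group with a total order $\le$ such that $x\le y\Rightarrow x+z\le y+z$. *)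

(* Defs.v *)
From HB Require Import structures.
From mathcomp Require Import all_boot all_order all_algebra.
Set Implicit Arguments. Unset Strict Implicit. Unset Printing Implicit Defensive.
Import GRing.Theory.
Local Open Scope ring_scope.

Definition qeq (G : zmodType) (le : G -> G -> Prop) (a b : G) : Prop :=
  le a b /\ le b a.

Definition cqoag (G : zmodType) (le : G -> G -> Prop) : Prop :=
  [/\ (forall x, le x x),
      (forall x y z, le x y -> le y z -> le x z),
      (forall x y, le x y \/ le y x),
      (forall x : G, qeq le x 0 -> x = 0)
    & (forall x y z : G, le x y -> ~ qeq le y z -> le (x + z) (y + z))].

Definition order_two (G : zmodType) (g : G) : Prop := g != 0 /\ g + g = 0.

Definition otype (G : zmodType) (le : G -> G -> Prop) (g : G) : Prop :=
  (forall h, qeq le h g <-> h = g) /\ ~ order_two g.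

Definition initial_segment (G : zmodType) (le : G -> G -> Prop) (S : G -> Prop) : Prop :=
  forall s a, S s -> le a s -> S a.

Definition is_subgroup (G : zmodType) (S : G -> Prop) : Prop :=
  [/\ S 0, (forall x y, S x -> S y -> S (x + y)) & (forall x, S x -> S (- x))].

(* (S, le) restricted is an ordered abelian group: le is a total order on S
   compatible with addition (S assumed to be a subgroup) *)
Definition ordered_on (G : zmodType) (le : G -> G -> Prop) (S : G -> Prop) : Prop :=
  [/\ (forall x, S x -> le x x),
      (forall x y z, S x -> S y -> S z -> le x y -> le y z -> le x z),
      (forall x y, S x -> S y -> le x y -> le y x -> x = y),
      (forall x y, S x -> S y -> le x y \/ le y x)
    & (forall x y z, S x -> S y -> S z -> le x y -> le (x + z) (y + z))].

(* Main.v *)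
Require Import Defs.
From mathcomp Require Import all_boot all_order all_algebra.
From Stdlib Require Import Classical.
Set Implicit Arguments. Unset Strict Implicit.
Import GRing.Theory.
Local Open Scope ring_scope.

Definition Ot (G : zmodType) (le : G -> G -> Prop) (a : G) : Prop :=
  a = 0 \/ ~ qeq le a (- a).

Lemma qsym (G : zmodType) (le : G -> G -> Prop) a b : qeq le a b -> qeq le b a.
Proof. by case. Qed.

Lemma lemV (G : zmodType) (le : G -> G -> Prop) : cqoag le ->
  forall g h, ~ qeq le g (-g) -> qeq le h g -> h = g.
Proof.
case=> refl trans tot q1 q2 g h Hg [hg gh].
apply: subr0_eq; apply: q1; split.
- have := q2 _ _ (-g) hg Hg; by rewrite subrr.
- have Hh : ~ qeq le h (-g).
    by move=> [a b]; apply: Hg; split; [apply: trans gh a | apply: trans b hg].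
  have := q2 _ _ (-g) gh Hh; by rewrite subrr.
Qed.

Lemma cls (G : zmodType) (le : G -> G -> Prop) : cqoag le ->
  forall g h, Ot le g -> qeq le h g -> h = g.
Proof.
move=> H g h [->|Hg] Hq; first by case: H => _ _ _ q1 _; apply: q1.
exact: lemV H g h Hg Hq.
Qed.

Lemma nonneg (G : zmodType) (le : G -> G -> Prop) : cqoag le ->
  forall a, qeq le a (-a) -> le 0 a.
Proof.
move=> H a Ha; have H' := H; case: H' => refl trans tot q1 q2.
case: (tot a 0) => // a0.
case: (classic (qeq le (-a) 0)) => [/q1 /eqP|Hn].
  by rewrite oppr_eq0 => /eqP ->.
have := q2 _ _ (-a) a0 (fun q => Hn (qsym q)); rewrite subrr add0r => h.
have : a = 0 by apply: q1; split => //; apply: trans h (proj2 Ha).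
by move=> ->.
Qed.

Lemma init (G : zmodType) (le : G -> G -> Prop) : cqoag le ->
  forall g a, Ot le g -> le a g -> Ot le a.
Proof.
move=> H g a Og ag; have H' := H; case: H' => refl trans tot q1 q2.
apply: NNPP => Na.
have a0 : a <> 0 by move=> e; apply: Na; left.
have aa : qeq le a (-a) by apply: NNPP => n; apply: Na; right.
have l0a := nonneg H aa.
have l0na : le 0 (-a) by apply: trans l0a (proj1 aa).
have nag : ~ qeq le a g.
  move=> q; have e := cls H Og q; subst a.
  by case: Og.
have nnag : ~ qeq le (-a) g.
  move=> [b c]; apply: nag; split; [apply: trans (proj1 aa) b|apply: trans c (proj2 aa)].
have h1 : le g (g - a).
  by have := q2 _ _ g l0na nnag; rewrite add0r addrC.
have h2 : le g (a + g) by have := q2 _ _ g l0a nag; rewrite add0r.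
case: (classic (qeq le (a + g) (-a))) => [q|nq].
  apply: nag; split => //; apply: trans h2 (trans _ _ _ (proj1 q) (proj2 aa)).
have := q2 _ _ (-a) h2 nq; rewrite [a + g]addrC addrK => h3.
have e : g - a = g by apply: (cls H Og); split.

apply: a0; apply/eqP; rewrite -oppr_eq0; apply/eqP.
by apply: (@addrI _ g); rewrite e addr0.
Qed.

Lemma Oneg (G : zmodType) (le : G -> G -> Prop) x : Ot le x -> Ot le (- x).
Proof.
case=> [->|h]; first by left; rewrite oppr0.
by right; rewrite opprK => q; apply: h; apply: qsym.
Qed.

Lemma Oadd (G : zmodType) (le : G -> G -> Prop) : cqoag le ->
  forall x y, Ot le x -> Ot le y -> Ot le (x + y).
Proof.
move=> H x y Ox Oy; have H' := H; case: H' => refl trans tot q1 q2.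
apply: NNPP => Ns.
have s0 : x + y <> 0 by move=> e; apply: Ns; left.
have ss : qeq le (x + y) (-(x + y)) by apply: NNPP => n; apply: Ns; right.
have Nns : ~ Ot le (-(x+y)).
  case=> [/eqP|h]; first by rewrite oppr_eq0 => /eqP.
  by apply: h; rewrite opprK; apply: qsym.
have xs : le x (-(x+y)).
  case: (tot x (-(x+y))) => // h; case: Nns; exact: init H x _ Ox h.
have sy : ~ qeq le (-(x+y)) y by move=> [h _]; apply: Nns; exact: init H y _ Oy h.
have := q2 _ _ y xs sy; rewrite opprD addrNK => h.
apply: Ns; exact: init H (-x) _ (Oneg Ox) h.
Qed.

Lemma otype_O (G : zmodType) (le : G -> G -> Prop) a : otype le a -> Ot le a.
Proof.
move=> [cl n2]; apply: NNPP => Na.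
have a0 : a <> 0 by move=> e; apply: Na; left.
have aa : qeq le a (-a) by apply: NNPP => n; apply: Na; right.
have e : -a = a by apply/cl; apply: qsym.
apply: n2; split; first by apply/eqP.
by rewrite -{1}e addNr.
Qed.

Lemma O_otype (G : zmodType) (le : G -> G -> Prop) : cqoag le ->
  forall a, Ot le a -> otype le a.
Proof.
move=> H a Oa; have H' := H; case: H' => refl trans tot q1 q2.
split.
  move=> h; split; first exact: (cls H Oa).
  by move=> ->; split.
move=> [/eqP nz e].
have e' : a = - a by apply/eqP; rewrite -addr_eq0 e.
case: Oa => // h; apply: h; rewrite -e'; by split.
Qed.

Lemma compat (G : zmodType) (le : G -> G -> Prop) : cqoag le ->
  forall x y z, Ot le x -> Ot le y -> Ot le z -> le x y -> le (x + z) (y + z).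
Proof.
move=> H x y z Ox Oy Oz xy; have H' := H; case: H' => refl trans tot q1 q2.
case: (classic (qeq le y z)) => [q|nq]; last exact: q2.
have e := cls H Oz q; subst z.
case: (classic (y = 0)) => [e0|y0]; first by subst y; rewrite !addr0.
have ny : ~ qeq le y (-y) by case: Oy.
apply: NNPP => Hn.
have yx : le (y + y) (x + y) by case: (tot (x + y) (y + y)).
have q3 : qeq le (x + y) (-y).
  apply: NNPP => n.
  have := q2 _ _ (-y) yx n; rewrite !addrK => h.
  have e : x = y by apply: (cls H Oy); split.
  by subst x; apply: Hn.
have E : x + y = -y by exact: (cls H (Oneg Oy) q3).
have Ex : x = - y - y by rewrite -[in LHS](addrK y x) E.
have h1 : le (y + y + y) 0.
  have := q2 _ _ y (eq_ind _ (le (y+y)) yx _ E) (fun q => ny (qsym q)).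
  by rewrite addNr.
have h2 : le (- (y + y + y)) 0.
  have := q2 _ _ (-y) (eq_ind _ (fun u => le u y) xy _ Ex) ny.
  by rewrite subrr !opprD.
have t0 : y + y + y = 0.
  case: (classic (qeq le (-(y+y+y)) 0)) => [/q1 /eqP|n].
    by rewrite oppr_eq0 => /eqP.
  have := q2 _ _ _ h1 (fun q => n (qsym q)); rewrite subrr add0r => h3.
  by case: n; split.
have : x = y.
  rewrite Ex -opprD; apply/eqP; rewrite eq_sym -addr_eq0; apply/eqP.
  by rewrite addrC.
by move=> e; apply: Hn; rewrite e; apply: refl.
Qed.

Theorem mainTheorem6 (G : zmodType) (le : G -> G -> Prop) :
  cqoag le ->
  [/\ initial_segment le (otype le),
      is_subgroup (otype le)
    & ordered_on le (otype le)].
Proof.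
move=> H; have H' := H; case: H' => refl trans tot q1 q2.
split.
- move=> s a Hs Ha; apply: (O_otype H); exact: (init H (otype_O Hs) Ha).
- split.
  + by apply: (O_otype H); left.
  + move=> x y Hx Hy; apply: (O_otype H); exact: (Oadd H (otype_O Hx) (otype_O Hy)).
  + move=> x Hx; apply: (O_otype H); exact: Oneg (otype_O Hx).
- split.
  + by move=> x _; apply: refl.
  + by move=> x y z _ _ _; apply: trans.
  + by move=> x y _ Hy a b; apply: (cls H (otype_O Hy)) _; split.
  + by move=> x y _ _; apply: tot.
  + by move=> x y z Hx Hy Hz; exact: (compat H (otype_O Hx) (otype_O Hy) (otype_O Hz)).
Qed.
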